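(* Let $0\le p\le1$ and let $\hat\rho=|\psi\rangle\langle\psi|$ with $|\psi\rangle$ any of $|\Phi^\pm\rangle=\sqrt p|0,0\rangle\pm\sqrt{1-p}|1,1\rangle$ or $|\Psi^\pm\rangle=\sqrt p|0,1\rangle\pm\sqrt{1-p}|1,0\rangle$ (Fock states of modes $A,B$). Then $Q(\hat\rho)=\frac{4}{\pi}\sqrt{p(1-p)}$, which equals $\frac{4}{\pi}$ times the negativity $\sqrt{p(1-p)}$ of $\hat\rho$; moreover the sign-binned quadrature correlation at $\theta=\varphi=0$, $E^{0,0}=\int\!\!\int f_{0,0}(u,v)\,\mathrm{sgn}(uv)\,du\,dv$, satisfies $|E^{0,0}|=\frac{4}{\pi}\sqrt{p(1-p)}$.
   Context: $|n\rangle$ are photon-number (Fock) states of a mode with quadratures $\hat x=(\hat a+\hat a^\dagger)/\sqrt2$, $\hat p=i(\hat a^\dagger-\hat a)/\sqrt2$. For angles $\theta,\varphi$, $\hat x_A^\theta=\cos\theta\,\hat x_A+\sin\theta\,\hat p_A$, $\hat x_B^\varphi=\cos\varphi\,\hat x_B+\sin\varphi\,\hat p_B$, and $f_{\theta,\varphi}(u,v)$ is the joint density of their outcomes on $\hat\rho$. For $u,v\ge0$, $S=f(u,v)+f(-u,-v)+f(u,-v)+f(-u,v)$, $D=f(u,v)+f(-u,-v)-f(u,-v)-f(-u,v)$, $\mathcal B_{\theta,\varphi}=|D|/S$ (0 where $S=0$), and $Q(\hat\rho)=\sup_{\theta,\varphi}\int\!\!\int f_{\theta,\varphi}(u,v)\mathcal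 B_{\theta,\varphi}(|u|,|v|)\,du\,dv$. *)

(* Defs.v *)
From Stdlib Require Import Reals Lra Arith.
Open Scope R_scope.

Fixpoint fsum (n : nat) (f : nat -> R) : R :=
  match n with O => 0 | S k => fsum k f + f k end.

(** Physicists' Hermite polynomials, computed as the pair (H_n, H_{n+1}). *)
Fixpoint herm_pair (n : nat) (x : R) : R * R :=
  match n with
  | O => (1, 2 * x)
  | S k => let (a, b) := herm_pair k x in (b, 2 * x * b - 2 * INR (S k) * a)
  end.
Definition hermite (n : nat) (x : R) : R := fst (herm_pair n x).

(** Fock-state wavefunction <x|n> in the x-quadrature representation,
    with x = (a + a^dagger)/sqrt 2. *)
Definition fock_wf (n : nat) (x : R) : R :=
  hermite n x * exp (- x ^ 2 / 2) / sqrt (2 ^ n * INR (fact n) * sqrt PI).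

(** A two-mode pure state with real Fock coefficients c m n (m, n < N):
    |psi> = sum_{m,n<N} c m n |m,n>.  Since x^theta = e^{i theta n} x e^{-i theta n},
    <u|_theta <v|_phi |m,n> = e^{-i(m theta + n phi)} psi_m(u) psi_n(v). *)
Definition ampRe (N : nat) (c : nat -> nat -> R) (th ph u v : R) : R :=
  fsum N (fun m => fsum N (fun n =>
    c m n * cos (INR m * th + INR n * ph) * fock_wf m u * fock_wf n v)).
Definition ampIm (N : nat) (c : nat -> nat -> R) (th ph u v : R) : R :=
  - fsum N (fun m => fsum N (fun n =>
    c m n * sin (INR m * th + INR n * ph) * fock_wf m u * fock_wf n v)).

Definition dens (N : nat) (c : nat -> nat -> R) (th ph u v : R) : R :=
  ampRe N c th ph u v ^ 2 + ampIm N c th ph u v ^ 2.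

Definition Ssum N c th ph u v : R :=
  dens N c th ph u v + dens N c th ph (-u) (-v)
  + dens N c th ph u (-v) + dens N c th ph (-u) v.
Definition Ddiff N c th ph u v : R :=
  dens N c th ph u v + dens N c th ph (-u) (-v)
  - dens N c th ph u (-v) - dens N c th ph (-u) v.
Definition Bfun N c th ph u v : R :=
  if Req_dec_T (Ssum N c th ph u v) 0 then 0
  else Rabs (Ddiff N c th ph u v) / Ssum N c th ph u v.

Definition Qintegrand N c th ph (u v : R) : R :=
  dens N c th ph u v * Bfun N c th ph (Rabs u) (Rabs v).

Definition has_int (f : R -> R) (a b I : R) : Prop :=
  exists pr : Riemann_integrable f a b, RiemannInt pr = I.

Definition has_int_square (g : R -> R -> R) (L I : R) : Prop :=
  exists h : R -> R,
    (forall u, has_int (fun v => g u v) (- L) L (h u)) /\ has_int h (- L) L I.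

Definition improper_int2 (g : R -> R -> R) (I : R) : Prop :=
  forall eps, 0 < eps -> exists M, forall L, M <= L ->
    exists J, has_int_square g L J /\ Rabs (J - I) < eps.

(** Q(rho) = sup_{theta,phi} of the integral. *)
Definition Qset N c : R -> Prop :=
  fun x => exists th ph, improper_int2 (Qintegrand N c th ph) x.

Definition sgn (x : R) : R :=
  if Rlt_dec 0 x then 1 else if Rlt_dec x 0 then -1 else 0.

(** The states (coefficients c m n of |m,n>); s = +1 or -1 selects the sign. *)
Definition PhiSt (p s : R) (m n : nat) : R :=
  match m, n with
  | O, O => sqrt p
  | S O, S O => s * sqrt (1 - p)
  | _, _ => 0
  end.
Definition PsiSt (p s : R) (m n : nat) : R :=
  match m, n with
  | O, S O => sqrt p
  | S O, O => s * sqrt (1 - p)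
  | _, _ => 0
  end.

(** Density matrix of the two-qubit-like block span{|m,n> : m,n in {0,1}},
    index i = 2m + n; entries <m,n|rho|m',n'> = c m n * c m' n'. *)
Definition rho4 (c : nat -> nat -> R) (i j : nat) : R :=
  c (i / 2)%nat (i mod 2)%nat * c (j / 2)%nat (j mod 2)%nat.

(** Partial transpose on mode A:  <m,n|rho^{T_A}|m',n'> = <m',n|rho|m,n'>. *)
Definition ptA (M : nat -> nat -> R) (i j : nat) : R :=
  M (2 * (j / 2) + i mod 2)%nat (2 * (i / 2) + j mod 2)%nat.

(** Negativity of a real symmetric 4x4 matrix M is N: there is an orthonormal
    eigenbasis v_0..v_3 with eigenvalues lam_0..lam_3 and N is the sum of the
    absolute values of the negative eigenvalues, i.e. N = (||M||_1 - 1)/2 for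
    a unit-trace M. *)
Definition negativity_is (M : nat -> nat -> R) (Nv : R) : Prop :=
  exists (v : nat -> nat -> R) (lam : nat -> R),
    (forall a b, (a < 4)%nat -> (b < 4)%nat ->
       fsum 4 (fun k => v a k * v b k) = if Nat.eqb a b then 1 else 0) /\
    (forall a i, (a < 4)%nat -> (i < 4)%nat ->
       fsum 4 (fun j => M i j * v a j) = lam a * v a i) /\
    Nv = fsum 4 (fun a => Rmax 0 (- lam a)).

(* Main.v *)
Require Import Defs.
From Stdlib Require Import Reals Lra Arith RList Lia.
Open Scope R_scope.

Lemma ftc (g G : R -> R) (a b : R) (pr : Riemann_integrable g a b) :
  a <= b -> (forall x, a <= x <= b -> continuity_pt g x) ->
  (forall x, a <= x <= b -> derivable_pt_lim G x (g x)) ->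
  RiemannInt pr = G b - G a.
Proof.
  intros hab C0 HG.
  pose proof (RiemannInt_P29 hab C0) as HF.
  assert (HG' : antiderivative g G a b).
  { split; [|exact hab]. intros x hx. exists (exist _ (g x) (HG x hx)). reflexivity. }
  destruct (antiderivative_Ucte _ _ _ _ _ HF HG') as [c Hc].
  rewrite (RiemannInt_P20 hab (FTC_P1 hab C0) pr).
  rewrite (Hc b), (Hc a); lra.
Qed.

Lemma refl_int (g : R -> R) (L : R) (pr1 : Riemann_integrable g (-L) 0)
  (pr2 : Riemann_integrable (fun x => g (-x)) 0 L) :
  0 <= L -> (forall x, -L <= x <= 0 -> continuity_pt g x) ->
  RiemannInt pr1 = RiemannInt pr2.
Proof.
  intros hL C0.
  assert (hab : -L <= 0) by lra.
  set (F := primitive hab (FTC_P1 hab C0)).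
  assert (HF : forall x, -L <= x <= 0 -> derivable_pt_lim F x (g x)).
  { intros x hx. apply RiemannInt_P28; exact hx. }
  rewrite (ftc g F (-L) 0 pr1 hab C0 HF).
  assert (C1 : forall x, 0 <= x <= L -> continuity_pt (fun x => g (-x)) x).
  { intros x hx. apply (continuity_pt_comp (fun x => - x) g).
    - reg.
    - apply C0; lra. }
  assert (HPhi : forall x, 0 <= x <= L ->
     derivable_pt_lim (fun x => - F (- x)) x (g (- x))).
  { intros x hx.
    replace (g (-x)) with (- (g (-x) * (-1))) by ring.
    apply derivable_pt_lim_opp.
    apply (derivable_pt_lim_comp (fun x => -x) F).
    - replace (-1) with (-(1)) by ring. apply derivable_pt_lim_opp, derivable_pt_lim_id.
    - apply HF; lra. }
  rewrite (ftc _ (fun x => - F (- x)) 0 L pr2 hL C1 HPhi).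
  replace (-0) with 0 by ring. ring.
Qed.

Lemma step_open (h : R -> R) (a b c : R) :
  a <= b -> (forall x, a < x < b -> h x = c) -> IsStepFun h a b.
Proof.
  intros Hab Hh.
  exists (cons a (cons b nil)). exists (cons c nil).
  unfold adapted_couple; repeat split.
  - unfold ordered_Rlist; intros; simpl in H; inversion H;
      [ simpl; assumption | elim (Nat.nle_succ_0 _ H1) ].
  - simpl; unfold Rmin; destruct (Rle_dec a b); [reflexivity | lra].
  - simpl; unfold Rmax; destruct (Rle_dec a b); [reflexivity | lra].
  - unfold constant_D_eq, open_interval; intros; simpl in H;
      inversion H; [ subst i; apply Hh; exact H0 | elim (Nat.nle_succ_0 _ H2) ].
Qed.

Lemma step_integrable (h : R -> R) (a b : R) :
  IsStepFun h a b -> Riemann_integrable h a b.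
Proof.
  intros Hs eps.
  exists (mkStepFun Hs). exists (mkStepFun (StepFun_P4 a b 0)). split.
  - intros; simpl. unfold Rminus; rewrite Rplus_opp_r, Rabs_R0; unfold fct_cte; right; reflexivity.
  - rewrite StepFun_P18, Rmult_0_l, Rabs_R0; apply (cond_pos eps).
Qed.

Lemma integrable_open_ext (f g : R -> R) (a b : R) :
  a <= b -> Riemann_integrable f a b -> (forall x, a < x < b -> f x = g x) ->
  Riemann_integrable g a b.
Proof.
  intros Hab Hf Hfg.
  assert (Hs : Riemann_integrable (fun x => g x - f x) a b).
  { apply step_integrable, (step_open _ a b 0 Hab). intros x hx; rewrite (Hfg x hx); ring. }
  apply Riemann_integrable_ext with (f := fun x => f x + 1 * (g x - f x)).
  - intros; ring.
  - apply RiemannInt_P10; assumption.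
Qed.

Definition k0 := / sqrt (sqrt PI).
Definition k1 := 2 / sqrt (2 * sqrt PI).

Lemma sqrtPI_pos : 0 < sqrt PI.
Proof. apply sqrt_lt_R0, PI_RGT_0. Qed.

Lemma wf0 x : fock_wf 0 x = k0 * exp (- x ^ 2 / 2).
Proof. unfold fock_wf, k0. change (hermite 0 x) with 1.
  replace (2 ^ 0 * INR (fact 0) * sqrt PI) with (sqrt PI) by (simpl; ring). field.
  apply Rgt_not_eq, sqrt_lt_R0, sqrtPI_pos. Qed.

Lemma wf1 x : fock_wf 1 x = k1 * x * exp (- x ^ 2 / 2).
Proof. unfold fock_wf, k1. change (hermite 1 x) with (2 * x).
  replace (2 ^ 1 * INR (fact 1) * sqrt PI) with (2 * sqrt PI) by (simpl; ring). field.
  apply Rgt_not_eq, sqrt_lt_R0. pose proof sqrtPI_pos. lra. Qed.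

Lemma k0_pos : 0 < k0.
Proof. unfold k0. apply Rinv_0_lt_compat, sqrt_lt_R0, sqrtPI_pos. Qed.
Lemma k1_pos : 0 < k1.
Proof. unfold k1. apply Rdiv_lt_0_compat; [lra|]. apply sqrt_lt_R0. pose proof sqrtPI_pos. lra. Qed.

Lemma k01_sq : (k0 * k1) ^ 2 = 2 / PI.
Proof.
  unfold k0, k1. pose proof sqrtPI_pos as h.
  assert (h2 : 0 <= 2 * sqrt PI) by lra.
  replace ((/ sqrt (sqrt PI) * (2 / sqrt (2 * sqrt PI))) ^ 2) with
    (4 / ((sqrt (sqrt PI))^2 * (sqrt (2 * sqrt PI))^2)).
  2:{ field. split; apply Rgt_not_eq, sqrt_lt_R0; lra. }
  rewrite !pow2_sqrt by lra.
  replace (sqrt PI * (2 * sqrt PI)) with (2 * (sqrt PI * sqrt PI)) by ring.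
  rewrite sqrt_sqrt by (left; apply PI_RGT_0). field. apply Rgt_not_eq, PI_RGT_0.
Qed.

Lemma dens_Phi p s th ph u v : 0 <= p <= 1 -> s * s = 1 ->
  dens 2 (PhiSt p s) th ph u v =
  p * (fock_wf 0 u ^ 2 * fock_wf 0 v ^ 2) + (1 - p) * (fock_wf 1 u ^ 2 * fock_wf 1 v ^ 2)
  + (2 * s * sqrt p * sqrt (1 - p) * cos (th + ph)) * (fock_wf 0 u * fock_wf 1 u) * (fock_wf 0 v * fock_wf 1 v).
Proof.
  intros hp hs.
  unfold dens, ampRe, ampIm. cbn [fsum PhiSt INR].
  rewrite !Rmult_0_l, !Rplus_0_l, !Rmult_1_l, cos_0, sin_0.
  pose proof (sin2_cos2 (th + ph)) as hsc. unfold Rsqr in hsc.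
  pose proof (sqrt_sqrt p ltac:(lra)) as h1.
  pose proof (sqrt_sqrt (1-p) ltac:(lra)) as h2.
  set (a := sqrt p) in *. set (b := sqrt (1-p)) in *.
  set (C := cos (th + ph)) in *. set (S := sin (th+ph)) in *.
  rewrite <- h2, <- h1.
  set (x0 := fock_wf 0 u) in *; set (y0 := fock_wf 0 v); set (x1 := fock_wf 1 u); set (y1 := fock_wf 1 v).
  transitivity (a*a*(x0^2*y0^2) + (s*s)*(b*b)*(S*S+C*C)*(x1^2*y1^2) + 2*s*a*b*C*(x0*x1)*(y0*y1)); [ring|].
  rewrite hs, hsc. ring.
Qed.

Lemma dens_Psi p s th ph u v : 0 <= p <= 1 -> s * s = 1 ->
  dens 2 (PsiSt p s) th ph u v =
  p * (fock_wf 0 u ^ 2 * fock_wf 1 v ^ 2) + (1 - p) * (fock_wf 1 u ^ 2 * fock_wf 0 v ^ 2)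
  + (2 * s * sqrt p * sqrt (1 - p) * cos (th - ph)) * (fock_wf 0 u * fock_wf 1 u) * (fock_wf 0 v * fock_wf 1 v).
Proof.
  intros hp hs.
  unfold dens, ampRe, ampIm. cbn [fsum PsiSt INR].
  rewrite !Rmult_0_l, !Rplus_0_l, !Rplus_0_r, !Rmult_1_l, cos_minus.
  pose proof (sin2_cos2 th) as hsc. unfold Rsqr in hsc.
  pose proof (sin2_cos2 ph) as hsc'. unfold Rsqr in hsc'.
  pose proof (sqrt_sqrt p ltac:(lra)) as h1.
  pose proof (sqrt_sqrt (1-p) ltac:(lra)) as h2.
  set (a := sqrt p) in *. set (b := sqrt (1-p)) in *.
  rewrite <- h2, <- h1.
  set (x0 := fock_wf 0 u) in *; set (y0 := fock_wf 0 v); set (x1 := fock_wf 1 u); set (y1 := fock_wf 1 v).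
  transitivity (a*a*(sin ph * sin ph + cos ph * cos ph)*(x0^2*y1^2) + (s*s)*(b*b)*(sin th * sin th + cos th * cos th)*(x1^2*y0^2) + 2*s*a*b*(cos th * cos ph + sin th * sin ph)*(x0*x1)*(y0*y1)); [ring|].
  rewrite hs, hsc, hsc'. ring.
Qed.
Definition Af x := fock_wf 0 x * fock_wf 1 x.

Lemma Af_eq x : Af x = k0 * k1 * x * exp (- x ^ 2).
Proof. unfold Af; rewrite wf0, wf1.
  replace (k0 * exp (- x ^ 2 / 2) * (k1 * x * exp (- x ^ 2 / 2))) with
    (k0 * k1 * x * (exp (- x ^ 2 / 2) * exp (- x ^ 2 / 2))) by ring.
  rewrite <- exp_plus. f_equal. f_equal. field. Qed.

Lemma cont_wf0 : continuity (fock_wf 0).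
Proof. intro x. assert (H : continuity (fun x => k0 * exp (- x ^ 2 / 2))) by reg.
  unfold continuity_pt, continue_in, limit1_in, limit_in in *. intros eps he.
  destruct (H x eps he) as [d [hd Hd]]. exists d; split; auto. intros y hy.
  rewrite !wf0. apply Hd; auto. Qed.

Lemma cont_wf1 : continuity (fock_wf 1).
Proof. intro x. assert (H : continuity (fun x => k1 * x * exp (- x ^ 2 / 2))) by reg.
  unfold continuity_pt, continue_in, limit1_in, limit_in in *. intros eps he.
  destruct (H x eps he) as [d [hd Hd]]. exists d; split; auto. intros y hy.
  rewrite !wf1. apply Hd; auto. Qed.


Lemma cont_ext (f g : R -> R) : (forall x, f x = g x) -> continuity f -> continuity g.
Proof. intros Hfg H x.
  unfold continuity_pt, continue_in, limit1_in, limit_in in *. intros eps he.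
  destruct (H x eps he) as [d [hd Hd]]. exists d; split; auto. intros y hy.
  rewrite <- !Hfg. apply Hd; auto. Qed.

Lemma cint (g : R -> R) a b : a <= b -> continuity g -> Riemann_integrable g a b.
Proof. intros h c. apply continuity_implies_RiemannInt; auto. Qed.

Lemma int_zero_fun (g : R -> R) a b (pr : Riemann_integrable g a b) :
  a <= b -> (forall x, a < x < b -> g x = 0) -> RiemannInt pr = 0.
Proof.
  intros hab hg.
  rewrite (RiemannInt_P18 pr (RiemannInt_P14 a b 0) hab).
  - rewrite RiemannInt_P15; ring.
  - intros x hx; rewrite hg; auto.
Qed.

Lemma odd_int_zero (g : R -> R) L (pr : Riemann_integrable g (-L) L) :
  0 <= L -> continuity g -> (forall x, g (-x) = - g x) -> RiemannInt pr = 0.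
Proof.
  intros hL hc hodd.
  assert (pr1 : Riemann_integrable g (-L) 0) by (apply cint; auto; lra).
  assert (pr2 : Riemann_integrable g 0 L) by (apply cint; auto).
  assert (hc3 : continuity (fun x => g (-x))).
  { apply (cont_ext (fun x => - g x)); [intro; rewrite hodd; ring|].
    apply (continuity_opp g hc). }
  assert (pr3 : Riemann_integrable (fun x => g (-x)) 0 L) by (apply cint; auto).
  rewrite <- (RiemannInt_P26 pr1 pr2 pr).
  rewrite (refl_int g L pr1 pr3 hL (fun x _ => hc x)).
  pose proof (RiemannInt_P13 pr2 pr3 (RiemannInt_P10 1 pr2 pr3)) as h4.
  erewrite int_zero_fun in h4; [lra | exact hL |].
  intros x _; cbv beta; rewrite hodd; ring.
Qed.

Lemma sgn_pos x : 0 < x -> sgn x = 1.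
Proof. intro h; unfold sgn; destruct (Rlt_dec 0 x); [reflexivity | lra]. Qed.
Lemma sgn_neg x : x < 0 -> sgn x = -1.
Proof. intro h; unfold sgn; destruct (Rlt_dec 0 x); [lra|]. destruct (Rlt_dec x 0); [reflexivity|lra]. Qed.
Lemma sgn_0 : sgn 0 = 0.
Proof. unfold sgn; destruct (Rlt_dec 0 0); [lra|]. destruct (Rlt_dec 0 0); [lra|reflexivity]. Qed.
Lemma sgn_mult x y : sgn (x * y) = sgn x * sgn y.
Proof.
  destruct (Rtotal_order x 0) as [hx|[hx|hx]]; destruct (Rtotal_order y 0) as [hy|[hy|hy]];
  subst; rewrite ?Rmult_0_l, ?Rmult_0_r, ?sgn_0; try ring;
  repeat first [rewrite (sgn_pos x) by lra | rewrite (sgn_neg x) by lra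
               | rewrite (sgn_pos y) by lra | rewrite (sgn_neg y) by lra];
  first [rewrite sgn_pos by nra | rewrite sgn_neg by nra]; ring.
Qed.

Lemma esgn_int (e : R -> R) L : 0 <= L -> continuity e ->
  Riemann_integrable (fun v => e v * sgn v) (-L) L.
Proof.
  intros hL hc.
  apply RiemannInt_P24 with 0.
  - apply integrable_open_ext with (fun x => fct_cte 0 x + (-1) * e x); [lra| |].
    + apply RiemannInt_P10; [apply RiemannInt_P14 | apply cint; auto; lra].
    + intros x hx; rewrite sgn_neg by lra; unfold fct_cte; ring.
  - apply integrable_open_ext with e; [lra| apply cint; auto |].
    intros x hx; rewrite sgn_pos by lra; ring.
Qed.

Lemma esgn_zero (e : R -> R) L (pr : Riemann_integrable (fun v => e v * sgn v) (-L) L) :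
  0 <= L -> continuity e -> (forall x, e (-x) = e x) -> RiemannInt pr = 0.
Proof.
  intros hL hc hev.
  assert (prE : Riemann_integrable e (-L) 0) by (apply cint; auto; lra).
  pose (prB' := RiemannInt_P10 (-1) (RiemannInt_P14 (-L) 0 0) prE).
  assert (prB : Riemann_integrable (fun v => e v * sgn v) (-L) 0).
  { apply integrable_open_ext with (fun x => fct_cte 0 x + (-1) * e x); [lra| exact prB' |].
    intros x hx; rewrite sgn_neg by lra; unfold fct_cte; ring. }
  assert (prA0 : Riemann_integrable e 0 L) by (apply cint; auto).
  assert (prA : Riemann_integrable (fun v => e v * sgn v) 0 L).
  { apply integrable_open_ext with e; [lra| exact prA0 |].
    intros x hx; rewrite sgn_pos by lra; ring. }
  rewrite <- (RiemannInt_P26 prB prA pr).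
  rewrite (RiemannInt_P18 prA prA0 hL) by (intros x hx; rewrite sgn_pos by lra; ring).
  rewrite (RiemannInt_P18 prB prB' ltac:(lra)) by (intros x hx; rewrite sgn_neg by lra; unfold fct_cte; ring).
  rewrite (RiemannInt_P13 (RiemannInt_P14 (-L) 0 0) prE prB'), RiemannInt_P15.
  assert (hc3 : continuity (fun x => e (-x))) by (apply (cont_ext e); auto; intro; rewrite hev; auto).
  assert (pr3 : Riemann_integrable (fun x => e (-x)) 0 L) by (apply cint; auto).
  rewrite (refl_int e L prE pr3 hL (fun x _ => hc x)).
  rewrite (RiemannInt_P18 pr3 prA0 hL) by (intros; apply hev).
  ring.
Qed.


Lemma Af_odd x : Af (-x) = - Af x.
Proof. rewrite !Af_eq. replace ((-x)^2) with (x^2) by ring. ring. Qed.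

Lemma Af_nonneg x : 0 <= x -> 0 <= Af x.
Proof. intro h. rewrite Af_eq. pose proof k0_pos; pose proof k1_pos; pose proof (exp_pos (- x^2)).
  apply Rmult_le_pos; [|lra]. apply Rmult_le_pos; [|lra]. nra. Qed.

Lemma Af_sgn x : Af x * sgn x = Rabs (Af x).
Proof.
  destruct (Rtotal_order x 0) as [h|[h|h]].
  - rewrite sgn_neg by lra. rewrite <- (Ropp_involutive x), Af_odd.
    rewrite Rabs_Ropp, Rabs_right by (apply Rle_ge, Af_nonneg; lra). ring.
  - subst; rewrite sgn_0, Af_eq. replace (k0 * k1 * 0 * exp (- 0 ^ 2)) with 0 by ring. rewrite Rabs_R0; ring.
  - rewrite sgn_pos by lra. rewrite Rabs_right by (apply Rle_ge, Af_nonneg; lra). ring.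
Qed.

Lemma cont_Af : continuity Af.
Proof. apply (cont_ext (fun x => k0 * k1 * x * exp (- x ^ 2))). intro; rewrite Af_eq; auto. reg. Qed.

Lemma cont_absAf : continuity (fun x => Rabs (Af x)).
Proof. apply (continuity_comp Af Rabs cont_Af Rcontinuity_abs). Qed.

Lemma deriv_G x : derivable_pt_lim (fun x => exp (- x ^ 2) * (- (k0 * k1) / 2)) x (Af x).
Proof.
  rewrite Af_eq.
  replace (k0 * k1 * x * exp (- x ^ 2)) with ((exp (- x^2) * (- (INR 2 * x ^ Init.Nat.pred 2))) * (- (k0 * k1) / 2))
    by (simpl; field).
  apply derivable_pt_lim_scal_right.
  apply (derivable_pt_lim_comp (fun x => - x ^ 2) exp).
  - apply derivable_pt_lim_opp with (f := fun y => y ^ 2). apply derivable_pt_lim_pow.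
  - apply derivable_pt_lim_exp.
Qed.

Definition IL (L : R) := k0 * k1 * (1 - exp (- L ^ 2)).

Lemma absA_int L (pr : Riemann_integrable (fun x => Rabs (Af x)) (-L) L) :
  0 <= L -> RiemannInt pr = IL L.
Proof.
  intro hL.
  assert (pr1 : Riemann_integrable (fun x => Rabs (Af x)) (-L) 0) by (apply cint; [lra|apply cont_absAf]).
  assert (pr2 : Riemann_integrable (fun x => Rabs (Af x)) 0 L) by (apply cint; [lra|apply cont_absAf]).
  assert (pr3 : Riemann_integrable (fun x => Rabs (Af (-x))) 0 L).
  { apply cint; [lra|]. apply (cont_ext (fun x => Rabs (Af x))); [|apply cont_absAf].
    intro; rewrite Af_odd, Rabs_Ropp; auto. }
  assert (pr4 : Riemann_integrable Af 0 L) by (apply cint; [lra|apply cont_Af]).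
  rewrite <- (RiemannInt_P26 pr1 pr2 pr).
  rewrite (refl_int _ L pr1 pr3 hL (fun x _ => cont_absAf x)).
  rewrite (RiemannInt_P18 pr3 pr4 hL) by (intros x hx; rewrite Af_odd, Rabs_Ropp, Rabs_right; [auto| apply Rle_ge, Af_nonneg; lra]).
  rewrite (RiemannInt_P18 pr2 pr4 hL) by (intros x hx; rewrite Rabs_right; [auto| apply Rle_ge, Af_nonneg; lra]).
  rewrite (ftc Af _ 0 L pr4 hL (fun x _ => cont_Af x) (fun x _ => deriv_G x)).
  unfold IL. replace (- 0 ^ 2) with 0 by ring. rewrite exp_0. field.
Qed.


Record Good (p K : R) (X Y Z W : R -> R) : Prop := {
  g_p : 0 <= p <= 1;
  g_K : Rabs K <= 2 * sqrt p * sqrt (1 - p);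
  g_Xe : forall x, X (-x) = X x; g_Ye : forall x, Y (-x) = Y x;
  g_Ze : forall x, Z (-x) = Z x; g_We : forall x, W (-x) = W x;
  g_Xn : forall x, 0 <= X x; g_Yn : forall x, 0 <= Y x;
  g_Zn : forall x, 0 <= Z x; g_Wn : forall x, 0 <= W x;
  g_Yc : continuity Y; g_Wc : continuity W;
  g_XZ : forall x, Af x ^ 2 = X x * Z x; g_YW : forall x, Af x ^ 2 = Y x * W x;
  g_YW0 : forall x, 0 < Y x + W x }.

Definition Eg p (X Y Z W : R -> R) u v := p * (X u * Y v) + (1 - p) * (Z u * W v).
Definition Cg K u v := K * Af u * Af v.
Definition Ssg (d : R -> R -> R) u v := d u v + d (-u) (-v) + d u (-v) + d (-u) v.
Definition Dsg (d : R -> R -> R) u v := d u v + d (-u) (-v) - d u (-v) - d (-u) v.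
Definition Bg d u v := if Req_dec_T (Ssg d u v) 0 then 0 else Rabs (Dsg d u v) / Ssg d u v.
Definition hg p K X Y Z W u v :=
  if Req_dec_T (Eg p X Y Z W u v) 0 then 0 else Cg K u v * Rabs (Cg K u v) / Eg p X Y Z W u v.

Lemma Qint_eq N c th ph u v :
  Qintegrand N c th ph u v = dens N c th ph u v * Bg (dens N c th ph) (Rabs u) (Rabs v).
Proof. reflexivity. Qed.

Lemma amgm a b P Q t : 0 <= P -> 0 <= Q -> 0 <= t -> t * t = P * Q -> 0 <= a -> 0 <= b ->
  2 * a * b * t <= a * a * P + b * b * Q.
Proof.
  intros hP hQ ht htt ha hb.
  destruct (Rle_or_lt (2 * a * b * t) (a * a * P + b * b * Q)) as [h|h]; auto.
  exfalso.
  set (S := a * a * P + b * b * Q) in *. set (T := 2 * a * b * t) in *.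
  assert (hS : 0 <= S) by (unfold S; apply Rplus_le_le_0_compat; apply Rmult_le_pos; try apply Rmult_le_pos; auto).
  assert (h2 : S * S < T * T).
  { apply Rle_lt_trans with (S * T). apply Rmult_le_compat_l; lra. apply Rmult_lt_compat_r; lra. }
  assert (h3 : T * T = 4 * (a*a) * (b*b) * (P*Q)) by (unfold T; rewrite <- htt; ring).
  assert (h4 : S * S - T * T = (a*a*P - b*b*Q) * (a*a*P - b*b*Q)) by (rewrite h3; unfold S; ring).
  pose proof (Rle_0_sqr (a*a*P - b*b*Q)). unfold Rsqr in *. lra.
Qed.


Lemma C_le_E p K X Y Z W u v : Good p K X Y Z W -> Rabs (Cg K u v) <= Eg p X Y Z W u v.
Proof.
  intro G. destruct G as [g_p g_K g_Xe g_Ye g_Ze g_We g_Xn g_Yn g_Zn g_Wn g_Yc g_Wc g_XZ g_YW g_YW0].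
  unfold Cg, Eg. rewrite !Rabs_mult.
  pose proof (sqrt_sqrt p ltac:(lra)) as h1.
  pose proof (sqrt_sqrt (1-p) ltac:(lra)) as h2.
  pose proof (sqrt_pos p); pose proof (sqrt_pos (1-p)).
  apply Rle_trans with (2 * sqrt p * sqrt (1 - p) * (Rabs (Af u) * Rabs (Af v))).
  - rewrite (Rmult_assoc (Rabs K)). apply Rmult_le_compat_r; [apply Rmult_le_pos; apply Rabs_pos | auto].
  - set (a := sqrt p) in *. set (b := sqrt (1 - p)) in *.
    rewrite <- h2, <- h1.
    replace (a * a * (X u * Y v) + b * b * (Z u * W v)) with (a * a * (X u * Y v) + b * b * (Z u * W v)) by ring.
    apply amgm; try apply Rmult_le_pos; auto; try apply Rabs_pos.
    assert (habs : forall x, Rabs x * Rabs x = x ^ 2).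
    { intro x. pose proof (Rsqr_abs x) as hx. unfold Rsqr in hx. rewrite <- hx. ring. }
    transitivity ((Rabs (Af u) * Rabs (Af u)) * (Rabs (Af v) * Rabs (Af v))); [ring|].
    rewrite !habs, g_XZ, g_YW. ring.
Qed.

Lemma even_abs (f : R -> R) x : (forall x, f (-x) = f x) -> f (Rabs x) = f x.
Proof. intro h. destruct (Rcase_abs x) as [hx|hx]; [rewrite Rabs_left by lra; apply h | rewrite Rabs_right by lra; auto]. Qed.

Lemma absAf_abs x : Rabs (Af (Rabs x)) = Rabs (Af x).
Proof. destruct (Rcase_abs x) as [hx|hx]; [rewrite (Rabs_left x) by lra; rewrite Af_odd, Rabs_Ropp; auto | rewrite (Rabs_right x) by lra; auto]. Qed.

Lemma Eg_abs p K X Y Z W u v : Good p K X Y Z W ->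
  Eg p X Y Z W (Rabs u) (Rabs v) = Eg p X Y Z W u v.
Proof. intro G. unfold Eg.
  rewrite (even_abs X u (g_Xe _ _ _ _ _ _ G)), (even_abs Y v (g_Ye _ _ _ _ _ _ G)),
    (even_abs Z u (g_Ze _ _ _ _ _ _ G)), (even_abs W v (g_We _ _ _ _ _ _ G)). auto. Qed.

Lemma Cg_abs K u v : Rabs (Cg K (Rabs u) (Rabs v)) = Rabs (Cg K u v).
Proof. unfold Cg. rewrite !Rabs_mult, !absAf_abs. auto. Qed.

Lemma Ssg_eq p K X Y Z W d u v : Good p K X Y Z W ->
  (forall u v, d u v = Eg p X Y Z W u v + Cg K u v) -> Ssg d u v = 4 * Eg p X Y Z W u v.
Proof. intros G hd. unfold Ssg. rewrite !hd. unfold Eg, Cg. rewrite !Af_odd.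
  rewrite !(g_Xe _ _ _ _ _ _ G), !(g_Ye _ _ _ _ _ _ G), !(g_Ze _ _ _ _ _ _ G), !(g_We _ _ _ _ _ _ G). ring. Qed.

Lemma Dsg_eq p K X Y Z W d u v : Good p K X Y Z W ->
  (forall u v, d u v = Eg p X Y Z W u v + Cg K u v) -> Dsg d u v = 4 * Cg K u v.
Proof. intros G hd. unfold Dsg. rewrite !hd. unfold Eg, Cg. rewrite !Af_odd.
  rewrite !(g_Xe _ _ _ _ _ _ G), !(g_Ye _ _ _ _ _ _ G), !(g_Ze _ _ _ _ _ _ G), !(g_We _ _ _ _ _ _ G). ring. Qed.

Lemma Q_decomp p K X Y Z W d u v : Good p K X Y Z W ->
  (forall u v, d u v = Eg p X Y Z W u v + Cg K u v) ->
  d u v * Bg d (Rabs u) (Rabs v) = Rabs (Cg K u v) + hg p K X Y Z W u v.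
Proof.
  intros G hd. unfold Bg, hg.
  rewrite (Ssg_eq _ _ _ _ _ _ _ _ _ G hd), (Dsg_eq _ _ _ _ _ _ _ _ _ G hd).
  rewrite (Eg_abs _ _ _ _ _ _ _ _ G), Rabs_mult, (Cg_abs K u v).
  pose proof (C_le_E _ _ _ _ _ _ u v G) as hCE.
  pose proof (Rabs_pos (Cg K u v)).
  rewrite hd.
  destruct (Req_dec_T (4 * Eg p X Y Z W u v) 0) as [h1|h1];
  destruct (Req_dec_T (Eg p X Y Z W u v) 0) as [h2|h2].
  - assert (hC : Rabs (Cg K u v) = 0) by lra.
    assert (hC0 : Cg K u v = 0).
    { destruct (Req_dec (Cg K u v) 0) as [e|e]; [exact e| exfalso; exact (Rabs_no_R0 _ e hC)]. }
    rewrite hC. ring.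
  - lra.
  - lra.
  - rewrite Rabs_right by lra. field. auto.
Qed.

Lemma Eg_odd_v p K X Y Z W u v : Good p K X Y Z W -> Eg p X Y Z W u (-v) = Eg p X Y Z W u v.
Proof. intro G. unfold Eg. rewrite (g_Ye _ _ _ _ _ _ G), (g_We _ _ _ _ _ _ G). auto. Qed.

Lemma hg_odd p K X Y Z W u v : Good p K X Y Z W -> hg p K X Y Z W u (-v) = - hg p K X Y Z W u v.
Proof.
  intro G. unfold hg. rewrite (Eg_odd_v _ _ _ _ _ _ _ _ G).
  assert (hc : Cg K u (-v) = - Cg K u v) by (unfold Cg; rewrite Af_odd; ring).
  rewrite hc, Rabs_Ropp.
  destruct (Req_dec_T (Eg p X Y Z W u v) 0); [ring | field; auto].
Qed.

Lemma dichot p K X Y Z W u : Good p K X Y Z W ->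
  (forall v, 0 < Eg p X Y Z W u v) \/ (forall v, Cg K u v = 0).
Proof.
  intro G. destruct G as [g_p g_K g_Xe g_Ye g_Ze g_We g_Xn g_Yn g_Zn g_Wn g_Yc g_Wc g_XZ g_YW g_YW0].
  destruct (Req_dec (Af u) 0) as [hA|hA].
  { right; intro v; unfold Cg; rewrite hA; ring. }
  destruct (Req_dec K 0) as [hK|hK].
  { right; intro v; unfold Cg; rewrite hK; ring. }
  left. intro v.
  assert (hA2 : 0 < X u * Z u).
  { rewrite <- g_XZ. replace (Af u ^ 2) with (Rsqr (Af u)) by (unfold Rsqr; ring). apply Rsqr_pos_lt; auto. }
  assert (hX : 0 < X u).
  { destruct (g_Xn u) as [h|h]; auto. rewrite <- h in hA2. lra. }
  assert (hZ : 0 < Z u).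
  { destruct (g_Zn u) as [h|h]; auto. rewrite <- h in hA2. lra. }
  assert (hab : 0 < sqrt p * sqrt (1 - p)).
  { pose proof (Rabs_pos_lt K hK). nra. }
  assert (hp0 : 0 < p).
  { destruct (proj1 g_p) as [h|h]; auto. rewrite <- h, sqrt_0 in hab. lra. }
  assert (hp1 : 0 < 1 - p).
  { destruct (Rle_lt_or_eq_dec 0 (1-p)) as [h|h]; [lra|auto|]. rewrite <- h, sqrt_0 in hab. lra. }
  unfold Eg.
  pose proof (g_YW0 v). pose proof (g_Yn v). pose proof (g_Wn v).
  set (m := Rmin (p * X u) ((1 - p) * Z u)).
  assert (hm : 0 < m) by (unfold m; apply Rmin_glb_lt; apply Rmult_lt_0_compat; auto).
  assert (hm1 : m <= p * X u) by apply Rmin_l.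
  assert (hm2 : m <= (1 - p) * Z u) by apply Rmin_r.
  apply Rlt_le_trans with (m * (Y v + W v)). apply Rmult_lt_0_compat; auto.
  assert (m * Y v <= p * X u * Y v) by (apply Rmult_le_compat_r; auto).
  assert (m * W v <= (1 - p) * Z u * W v) by (apply Rmult_le_compat_r; auto).
  nra.
Qed.


Lemma cont_lin (f g : R -> R) a b : continuity f -> continuity g -> continuity (fun x => a * f x + b * g x).
Proof. intros hf hg. apply (cont_ext (plus_fct (mult_real_fct a f) (mult_real_fct b g))); [intro; reflexivity|].
  apply continuity_plus; apply continuity_scal; auto. Qed.

Lemma cont_hg p K X Y Z W u : Good p K X Y Z W -> continuity (fun v => hg p K X Y Z W u v).
Proof.
  intro G.
  assert (hC : continuity (fun v => Cg K u v)).
  { apply (cont_ext (mult_real_fct (K * Af u) Af)); [intro; reflexivity|]. apply continuity_scal, cont_Af. }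
  destruct (dichot _ _ _ _ _ _ u G) as [hE|hC0].
  - assert (hEc : continuity (fun v => Eg p X Y Z W u v)).
    { apply (cont_ext (fun v => (p * X u) * Y v + ((1 - p) * Z u) * W v)); [intro; unfold Eg; ring|].
      apply cont_lin; apply G. }
    apply (cont_ext (div_fct (mult_fct (fun v => Cg K u v) (comp Rabs (fun v => Cg K u v))) (fun v => Eg p X Y Z W u v))).
    + intro v. unfold hg, div_fct, mult_fct, comp. destruct (Req_dec_T (Eg p X Y Z W u v) 0) as [e|e].
      * specialize (hE v); lra.
      * reflexivity.
    + apply continuity_div; [apply continuity_mult; [auto|apply continuity_comp; auto; apply Rcontinuity_abs] | auto |].
      intro v; specialize (hE v); lra.
  - apply (cont_ext (fct_cte 0)).
    + intro v. unfold hg, fct_cte. rewrite hC0. destruct (Req_dec_T (Eg p X Y Z W u v) 0); [auto|]. rewrite Rabs_R0. field; auto.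
    + apply continuity_const. intros x y; reflexivity.
Qed.

Lemma int_scal (f : R -> R) a b c (prf : Riemann_integrable f a b)
  (pr : Riemann_integrable (fun x => c * f x) a b) : a <= b -> RiemannInt pr = c * RiemannInt prf.
Proof.
  intro hab.
  pose proof (RiemannInt_P13 (RiemannInt_P14 a b 0) prf (RiemannInt_P10 c (RiemannInt_P14 a b 0) prf)) as h.
  rewrite RiemannInt_P15 in h.
  rewrite (RiemannInt_P18 pr (RiemannInt_P10 c (RiemannInt_P14 a b 0) prf) hab).
  - rewrite h; ring.
  - intros; unfold fct_cte; ring.
Qed.

Lemma int_lin (f g : R -> R) a b al be (prf : Riemann_integrable f a b) (prg : Riemann_integrable g a b)
  (pr : Riemann_integrable (fun x => al * f x + be * g x) a b) : a <= b ->
  RiemannInt pr = al * RiemannInt prf + be * RiemannInt prg.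
Proof.
  intro hab.
  pose (prs := Riemann_integrable_scal al prf).
  pose proof (RiemannInt_P13 prs prg (RiemannInt_P10 be prs prg)) as h.
  rewrite (int_scal f a b al prf prs hab) in h.
  rewrite (RiemannInt_P18 pr (RiemannInt_P10 be prs prg) hab); [auto|].
  intros; reflexivity.
Qed.

Lemma has_int_ext (f g : R -> R) a b I : a <= b -> (forall x, f x = g x) -> has_int g a b I -> has_int f a b I.
Proof.
  intros hab hfg [pr hpr].
  pose (pr' := @Riemann_integrable_ext g f a b (fun x _ => eq_sym (hfg x)) pr).
  exists pr'. rewrite <- hpr. apply RiemannInt_P18; auto.
Qed.

Lemma inner_Q p K X Y Z W d u L : Good p K X Y Z W ->
  (forall u v, d u v = Eg p X Y Z W u v + Cg K u v) -> 0 <= L ->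
  has_int (fun v => d u v * Bg d (Rabs u) (Rabs v)) (-L) L (Rabs K * Rabs (Af u) * IL L).
Proof.
  intros G hd hL.
  apply has_int_ext with (fun v => (Rabs K * Rabs (Af u)) * Rabs (Af v) + 1 * hg p K X Y Z W u v); [lra| |].
  - intro v. rewrite (Q_decomp _ _ _ _ _ _ _ _ _ G hd). unfold Cg. rewrite !Rabs_mult. ring.
  - assert (prA : Riemann_integrable (fun v => Rabs (Af v)) (-L) L) by (apply cint; [lra|apply cont_absAf]).
    assert (prH : Riemann_integrable (fun v => hg p K X Y Z W u v) (-L) L) by (apply cint; [lra|apply cont_hg; auto]).
    exists (RiemannInt_P10 1 (Riemann_integrable_scal (Rabs K * Rabs (Af u)) prA) prH).
    rewrite (int_lin _ _ _ _ _ _ prA prH) by lra.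
    rewrite (absA_int L prA hL).
    rewrite (odd_int_zero _ L prH hL (cont_hg _ _ _ _ _ _ u G)) by (intro; apply hg_odd; auto).
    ring.
Qed.


Lemma outer_int V L : 0 <= L ->
  has_int (fun u => V * Rabs (Af u) * IL L) (-L) L (V * IL L ^ 2).
Proof.
  intro hL.
  assert (prA : Riemann_integrable (fun v => Rabs (Af v)) (-L) L) by (apply cint; [lra|apply cont_absAf]).
  apply has_int_ext with (fun u => (V * IL L) * Rabs (Af u)); [lra| intro; ring |].
  exists (Riemann_integrable_scal (V * IL L) prA).
  rewrite (int_scal _ _ _ _ prA) by lra. rewrite (absA_int L prA hL). ring.
Qed.

Lemma square_Q p K X Y Z W d L : Good p K X Y Z W ->
  (forall u v, d u v = Eg p X Y Z W u v + Cg K u v) -> 0 <= L ->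
  has_int_square (fun u v => d u v * Bg d (Rabs u) (Rabs v)) L (Rabs K * IL L ^ 2).
Proof.
  intros G hd hL. exists (fun u => Rabs K * Rabs (Af u) * IL L). split.
  - intro u. apply (inner_Q p K X Y Z W); auto.
  - apply outer_int; auto.
Qed.

Lemma E_decomp p K X Y Z W d u v : Good p K X Y Z W ->
  (forall u v, d u v = Eg p X Y Z W u v + Cg K u v) ->
  d u v * sgn (u * v) = sgn u * (p * X u) * (Y v * sgn v) + sgn u * ((1 - p) * Z u) * (W v * sgn v)
     + K * Rabs (Af u) * Rabs (Af v).
Proof.
  intros G hd. rewrite hd, sgn_mult, <- !Af_sgn. unfold Eg, Cg. ring.
Qed.

Lemma inner_E p K X Y Z W d u L : Good p K X Y Z W ->
  (forall u v, d u v = Eg p X Y Z W u v + Cg K u v) -> 0 <= L ->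
  has_int (fun v => d u v * sgn (u * v)) (-L) L (K * Rabs (Af u) * IL L).
Proof.
  intros G hd hL.
  apply has_int_ext with (fun v => 1 * (sgn u * (p * X u) * (Y v * sgn v) + sgn u * ((1 - p) * Z u) * (W v * sgn v))
     + (K * Rabs (Af u)) * Rabs (Af v)); [lra| intro v; rewrite (E_decomp _ _ _ _ _ _ _ _ _ G hd); ring |].
  assert (prA : Riemann_integrable (fun v => Rabs (Af v)) (-L) L) by (apply cint; [lra|apply cont_absAf]).
  assert (prY := esgn_int Y L hL (g_Yc _ _ _ _ _ _ G)).
  assert (prW := esgn_int W L hL (g_Wc _ _ _ _ _ _ G)).
  pose (prYW := RiemannInt_P10 (sgn u * ((1 - p) * Z u)) (Riemann_integrable_scal (sgn u * (p * X u)) prY) prW).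
  exists (RiemannInt_P10 (K * Rabs (Af u)) (Riemann_integrable_scal 1 prYW) prA).
  rewrite (int_lin _ _ _ _ _ _ prYW prA) by lra.
  rewrite (int_lin _ _ _ _ _ _ prY prW prYW) by lra.
  rewrite (esgn_zero Y L prY hL (g_Yc _ _ _ _ _ _ G) (g_Ye _ _ _ _ _ _ G)).
  rewrite (esgn_zero W L prW hL (g_Wc _ _ _ _ _ _ G) (g_We _ _ _ _ _ _ G)).
  rewrite (absA_int L prA hL). ring.
Qed.

Lemma square_E p K X Y Z W d L : Good p K X Y Z W ->
  (forall u v, d u v = Eg p X Y Z W u v + Cg K u v) -> 0 <= L ->
  has_int_square (fun u v => d u v * sgn (u * v)) L (K * IL L ^ 2).
Proof.
  intros G hd hL. exists (fun u => K * Rabs (Af u) * IL L). split.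
  - intro u. apply (inner_E p K X Y Z W); auto.
  - apply outer_int; auto.
Qed.


Lemma IL_sq L : IL L ^ 2 = 2 / PI * (1 - exp (- L ^ 2)) ^ 2.
Proof. unfold IL. rewrite <- k01_sq. ring. Qed.

Lemma improper_lim g V : (forall L, 0 <= L -> has_int_square g L (V * IL L ^ 2)) ->
  improper_int2 g (V * (2 / PI)).
Proof.
  intros H eps heps.
  pose proof PI_RGT_0 as hpi.
  set (c := Rabs V * (4 / PI)).
  assert (hc : 0 <= c) by (unfold c; apply Rmult_le_pos; [apply Rabs_pos| apply Rlt_le, Rdiv_lt_0_compat; lra]).
  exists (c / eps + 1). intros L hL.
  assert (hce : 0 <= c / eps) by (apply Rmult_le_pos; [lra| apply Rlt_le, Rinv_0_lt_compat; lra]).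
  assert (hL0 : 0 < L) by lra.
  exists (V * IL L ^ 2). split; [apply H; lra|].
  rewrite IL_sq.
  assert (he : exp (- L ^ 2) = / exp (L ^ 2)) by apply exp_Ropp.
  pose proof (exp_ineq1_le (L ^ 2)) as hx.
  set (e := exp (- L ^ 2)) in *.
  assert (he0 : 0 < e) by apply exp_pos.
  assert (he1 : e <= / L).
  { rewrite he. apply Rinv_le_contravar; [lra| nra]. }
  assert (he2 : e <= 1).
  { rewrite he. rewrite <- Rinv_1. apply Rinv_le_contravar; [lra| nra]. }
  replace (V * (2 / PI * (1 - e) ^ 2) - V * (2 / PI)) with (- (V * (2 / PI)) * (e * (2 - e))) by (field; lra).
  rewrite Rabs_mult, Rabs_Ropp, Rabs_mult, (Rabs_right (2 / PI)) by (apply Rle_ge, Rlt_le, Rdiv_lt_0_compat; lra).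
  rewrite (Rabs_right (e * (2 - e))) by (apply Rle_ge, Rmult_le_pos; lra).
  apply Rle_lt_trans with (c * e).
  - unfold c. replace (Rabs V * (4 / PI) * e) with (Rabs V * (2 / PI) * (e * 2)) by (field; lra).
    apply Rmult_le_compat_l. apply Rmult_le_pos; [apply Rabs_pos | apply Rlt_le, Rdiv_lt_0_compat; lra].
    nra.
  - apply Rle_lt_trans with (c * / L). apply Rmult_le_compat_l; auto.
    assert (c < eps * L).
    { assert (c / eps < L) by lra. unfold Rdiv in H0.
      apply (Rmult_lt_compat_l eps) in H0; [|lra]. rewrite <- Rmult_assoc, (Rmult_comm eps c), Rmult_assoc, Rinv_r, Rmult_1_r in H0 by lra. lra. }
    apply (Rmult_lt_reg_r L); [lra|]. rewrite Rmult_assoc, Rinv_l, Rmult_1_r by lra. lra.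
Qed.

Lemma sq_unique g L J1 J2 : 0 <= L -> has_int_square g L J1 -> has_int_square g L J2 -> J1 = J2.
Proof.
  intros hL [h1 [H1 [pr1 e1]]] [h2 [H2 [pr2 e2]]].
  assert (hh : forall u, h1 u = h2 u).
  { intro u. destruct (H1 u) as [q1 f1]. destruct (H2 u) as [q2 f2]. rewrite <- f1, <- f2. apply RiemannInt_P5. }
  rewrite <- e1, <- e2. apply RiemannInt_P18; [lra|]. intros; apply hh.
Qed.

Lemma improper_unique g I1 I2 : improper_int2 g I1 -> improper_int2 g I2 -> I1 = I2.
Proof.
  intros H1 H2.
  destruct (Req_dec I1 I2) as [e|ne]; auto. exfalso.
  set (eps := Rabs (I1 - I2) / 2).
  assert (heps : 0 < eps) by (unfold eps; apply Rdiv_lt_0_compat; [apply Rabs_pos_lt; lra| lra]).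
  destruct (H1 eps heps) as [M1 HM1]. destruct (H2 eps heps) as [M2 HM2].
  set (L := Rmax (Rmax M1 M2) 0).
  assert (hL1 : M1 <= L) by (unfold L; apply Rle_trans with (Rmax M1 M2); [apply Rmax_l|apply Rmax_l]).
  assert (hL2 : M2 <= L) by (unfold L; apply Rle_trans with (Rmax M1 M2); [apply Rmax_r|apply Rmax_l]).
  assert (hL0 : 0 <= L) by (unfold L; apply Rmax_r).
  destruct (HM1 L hL1) as [J1 [hJ1 a1]]. destruct (HM2 L hL2) as [J2 [hJ2 a2]].
  rewrite (sq_unique g L J1 J2 hL0 hJ1 hJ2) in a1.
  assert (Rabs (I1 - I2) <= Rabs (J2 - I1) + Rabs (J2 - I2)).
  { replace (I1 - I2) with ((J2 - I2) - (J2 - I1)) by ring.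
    unfold Rminus at 1. eapply Rle_trans; [apply Rabs_triang|]. rewrite Rabs_Ropp. lra. }
  unfold eps in *. lra.
Qed.


Lemma final p c (Kf : R -> R -> R) X Y Z W :
  0 <= p <= 1 ->
  (forall th ph, Good p (Kf th ph) X Y Z W) ->
  (forall th ph u v, dens 2 c th ph u v = Eg p X Y Z W u v + Cg (Kf th ph) u v) ->
  Rabs (Kf 0 0) = 2 * sqrt p * sqrt (1 - p) ->
    (forall th ph, exists I, improper_int2 (Qintegrand 2 c th ph) I) /\
    is_lub (Qset 2 c) (4 / PI * sqrt (p * (1 - p))) /\
    (exists E, improper_int2 (fun u v => dens 2 c 0 0 u v * sgn (u * v)) E /\
               Rabs E = 4 / PI * sqrt (p * (1 - p))).
Proof.
  intros hp HG hd hK0.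
  pose proof PI_RGT_0 as hpi.
  assert (hsq : sqrt (p * (1 - p)) = sqrt p * sqrt (1 - p)) by (apply sqrt_mult_alt; lra).
  assert (HQ : forall th ph, improper_int2 (Qintegrand 2 c th ph) (Rabs (Kf th ph) * (2 / PI))).
  { intros th ph. apply improper_lim. intros L hL.
    exact (square_Q p (Kf th ph) X Y Z W (dens 2 c th ph) L (HG th ph) (hd th ph) hL). }
  split; [|split].
  - intros th ph. eexists; apply HQ.
  - split.
    + intros x [th [ph hx]]. rewrite (improper_unique _ _ _ hx (HQ th ph)).
      pose proof (g_K _ _ _ _ _ _ (HG th ph)). rewrite hsq.
      apply Rle_trans with (2 * sqrt p * sqrt (1 - p) * (2 / PI)).
      * apply Rmult_le_compat_r; [apply Rlt_le, Rdiv_lt_0_compat; lra| auto].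
      * right; field; lra.
    + intros b hb. specialize (hb _ (ex_intro _ 0 (ex_intro _ 0 (HQ 0 0)))).
      rewrite hsq. rewrite hK0 in hb. replace (4 / PI * (sqrt p * sqrt (1 - p))) with (2 * sqrt p * sqrt (1 - p) * (2 / PI)) by (field; lra). auto.
  - exists (Kf 0 0 * (2 / PI)). split.
    + apply improper_lim. intros L hL.
      exact (square_E p (Kf 0 0) X Y Z W (dens 2 c 0 0) L (HG 0 0) (hd 0 0) hL).
    + rewrite Rabs_mult, hK0, (Rabs_right (2 / PI)) by (apply Rle_ge, Rlt_le, Rdiv_lt_0_compat; lra).
      rewrite hsq. field; lra.
Qed.


Definition q0 x := fock_wf 0 x ^ 2.
Definition q1 x := fock_wf 1 x ^ 2.

Lemma q0_even x : q0 (-x) = q0 x.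
Proof. unfold q0; rewrite !wf0. replace ((-x)^2) with (x^2) by ring. auto. Qed.
Lemma q1_even x : q1 (-x) = q1 x.
Proof. unfold q1; rewrite !wf1. replace ((-x)^2) with (x^2) by ring. ring. Qed.
Lemma q0_nn x : 0 <= q0 x.
Proof. unfold q0; apply pow2_ge_0. Qed.
Lemma q1_nn x : 0 <= q1 x.
Proof. unfold q1; apply pow2_ge_0. Qed.
Lemma q0_pos x : 0 < q0 x.
Proof. unfold q0; rewrite wf0. pose proof k0_pos. pose proof (exp_pos (- x ^ 2 / 2)).
  apply pow_lt. apply Rmult_lt_0_compat; auto. Qed.
Lemma q0_cont : continuity q0.
Proof. apply (cont_ext (mult_fct (fock_wf 0) (fock_wf 0))); [intro; unfold q0, mult_fct; ring|].
  apply continuity_mult; apply cont_wf0. Qed.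
Lemma q1_cont : continuity q1.
Proof. apply (cont_ext (mult_fct (fock_wf 1) (fock_wf 1))); [intro; unfold q1, mult_fct; ring|].
  apply continuity_mult; apply cont_wf1. Qed.

Lemma K_bound p s a : 0 <= p <= 1 -> (s = 1 \/ s = -1) ->
  Rabs (2 * s * sqrt p * sqrt (1 - p) * cos a) <= 2 * sqrt p * sqrt (1 - p).
Proof.
  intros hp hs. pose proof (sqrt_pos p). pose proof (sqrt_pos (1 - p)).
  rewrite !Rabs_mult. rewrite (Rabs_right 2), (Rabs_right (sqrt p)), (Rabs_right (sqrt (1 - p))) by lra.
  assert (Rabs s = 1) by (destruct hs; subst; [apply Rabs_R1| rewrite Rabs_left by lra; ring]).
  rewrite H1. pose proof (COS_bound a).
  assert (Rabs (cos a) <= 1) by (apply Rabs_le; lra).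
  assert (0 <= 2 * sqrt p * sqrt (1 - p)) by (apply Rmult_le_pos; lra).
  replace (2 * 1 * sqrt p * sqrt (1 - p) * Rabs (cos a)) with ((2 * sqrt p * sqrt (1 - p)) * Rabs (cos a)) by ring.
  pose proof (Rabs_pos (cos a)). nra.
Qed.

Lemma Good_Phi p s a : 0 <= p <= 1 -> (s = 1 \/ s = -1) ->
  Good p (2 * s * sqrt p * sqrt (1 - p) * cos a) q0 q0 q1 q1.
Proof.
  intros hp hs. constructor; auto using K_bound, q0_even, q1_even, q0_nn, q1_nn, q0_cont, q1_cont.
  - intro; unfold Af, q0, q1; ring.
  - intro; unfold Af, q0, q1; ring.
  - intro x; pose proof (q0_pos x); pose proof (q1_nn x); lra.
Qed.

Lemma Good_Psi p s a : 0 <= p <= 1 -> (s = 1 \/ s = -1) ->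
  Good p (2 * s * sqrt p * sqrt (1 - p) * cos a) q0 q1 q1 q0.
Proof.
  intros hp hs. constructor; auto using K_bound, q0_even, q1_even, q0_nn, q1_nn, q0_cont, q1_cont.
  - intro; unfold Af, q0, q1; ring.
  - intro; unfold Af, q0, q1; ring.
  - intro x; pose proof (q0_pos x); pose proof (q1_nn x); lra.
Qed.

Lemma K00 p s : 0 <= p <= 1 -> (s = 1 \/ s = -1) -> forall a, a = 0 ->
  Rabs (2 * s * sqrt p * sqrt (1 - p) * cos a) = 2 * sqrt p * sqrt (1 - p).
Proof.
  intros hp hs a ha; subst. rewrite cos_0. pose proof (sqrt_pos p). pose proof (sqrt_pos (1 - p)).
  rewrite !Rabs_mult. rewrite (Rabs_right 2), (Rabs_right (sqrt p)), (Rabs_right (sqrt (1 - p))), Rabs_R1 by lra.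
  assert (Rabs s = 1) by (destruct hs; subst; [apply Rabs_R1| rewrite Rabs_left by lra; ring]).
  rewrite H1. ring.
Qed.

Lemma part_Phi p s : 0 <= p <= 1 -> (s = 1 \/ s = -1) ->
    (forall th ph, exists I, improper_int2 (Qintegrand 2 (PhiSt p s) th ph) I) /\
    is_lub (Qset 2 (PhiSt p s)) (4 / PI * sqrt (p * (1 - p))) /\
    (exists E, improper_int2 (fun u v => dens 2 (PhiSt p s) 0 0 u v * sgn (u * v)) E /\
               Rabs E = 4 / PI * sqrt (p * (1 - p))).
Proof.
  intros hp hs.
  assert (hss : s * s = 1) by (destruct hs; subst; ring).
  apply (final p (PhiSt p s) (fun th ph => 2 * s * sqrt p * sqrt (1 - p) * cos (th + ph)) q0 q0 q1 q1 hp).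
  - intros; apply Good_Phi; auto.
  - intros th ph u v. rewrite dens_Phi by auto. reflexivity.
  - apply K00; auto; ring.
Qed.

Lemma part_Psi p s : 0 <= p <= 1 -> (s = 1 \/ s = -1) ->
    (forall th ph, exists I, improper_int2 (Qintegrand 2 (PsiSt p s) th ph) I) /\
    is_lub (Qset 2 (PsiSt p s)) (4 / PI * sqrt (p * (1 - p))) /\
    (exists E, improper_int2 (fun u v => dens 2 (PsiSt p s) 0 0 u v * sgn (u * v)) E /\
               Rabs E = 4 / PI * sqrt (p * (1 - p))).
Proof.
  intros hp hs.
  assert (hss : s * s = 1) by (destruct hs; subst; ring).
  apply (final p (PsiSt p s) (fun th ph => 2 * s * sqrt p * sqrt (1 - p) * cos (th - ph)) q0 q1 q1 q0 hp).
  - intros; apply Good_Psi; auto.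
  - intros th ph u v. rewrite dens_Psi by auto. reflexivity.
  - apply K00; auto; ring.
Qed.


Definition rr := sqrt (/ 2).
Lemma rr_sq : rr * rr = / 2.
Proof. unfold rr; apply sqrt_sqrt; lra. Qed.

Definition vecs (i0 i1 j0 j1 : nat) (a k : nat) : R :=
  match a with
  | O => if Nat.eqb k i0 then 1 else 0
  | 1%nat => if Nat.eqb k i1 then 1 else 0
  | 2%nat => if Nat.eqb k j0 then rr else if Nat.eqb k j1 then rr else 0
  | _ => if Nat.eqb k j0 then rr else if Nat.eqb k j1 then - rr else 0
  end.
Definition lams (l0 l1 w : R) (a : nat) : R :=
  match a with O => l0 | 1%nat => l1 | 2%nat => w | _ => - w end.

Lemma neg_sum l0 l1 w : 0 <= l0 -> 0 <= l1 ->
  fsum 4 (fun a => Rmax 0 (- lams l0 l1 w a)) = Rabs w.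
Proof.
  intros h0 h1. cbn. rewrite (Rmax_left 0 (- l0)), (Rmax_left 0 (- l1)) by lra.
  unfold Rmax, Rabs. destruct (Rle_dec 0 (-w)); destruct (Rle_dec 0 (- - w)); destruct (Rcase_abs w); lra.
Qed.

Lemma neg_Phi p s : 0 <= p <= 1 -> (s = 1 \/ s = -1) ->
  negativity_is (ptA (rho4 (PhiSt p s))) (sqrt (p * (1 - p))).
Proof.
  intros hp hs.
  pose proof rr_sq as hr.
  exists (vecs 0 3 1 2), (lams (sqrt p * sqrt p) ((s * sqrt (1 - p)) * (s * sqrt (1 - p))) (sqrt p * (s * sqrt (1 - p)))).
  split; [|split].
  - intros a b ha hb.
    destruct a as [|[|[|[|a]]]]; try lia; destruct b as [|[|[|[|b]]]]; try lia; cbn; lra.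
  - intros a i ha hi.
    destruct a as [|[|[|[|a]]]]; try lia; destruct i as [|[|[|[|i]]]]; try lia; unfold ptA, rho4; cbn; ring.
  - rewrite neg_sum by (apply Rle_0_sqr).
    rewrite sqrt_mult_alt by lra. rewrite !Rabs_mult.
    rewrite (Rabs_right (sqrt p)), (Rabs_right (sqrt (1 - p))) by (apply Rle_ge, sqrt_pos).
    destruct hs; subst; [rewrite Rabs_R1 | rewrite Rabs_left by lra]; ring.
Qed.

Lemma neg_Psi p s : 0 <= p <= 1 -> (s = 1 \/ s = -1) ->
  negativity_is (ptA (rho4 (PsiSt p s))) (sqrt (p * (1 - p))).
Proof.
  intros hp hs.
  pose proof rr_sq as hr.
  exists (vecs 1 2 0 3), (lams (sqrt p * sqrt p) ((s * sqrt (1 - p)) * (s * sqrt (1 - p))) (sqrt p * (s * sqrt (1 - p)))).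
  split; [|split].
  - intros a b ha hb.
    destruct a as [|[|[|[|a]]]]; try lia; destruct b as [|[|[|[|b]]]]; try lia; cbn; lra.
  - intros a i ha hi.
    destruct a as [|[|[|[|a]]]]; try lia; destruct i as [|[|[|[|i]]]]; try lia; unfold ptA, rho4; cbn; ring.
  - rewrite neg_sum by (apply Rle_0_sqr).
    rewrite sqrt_mult_alt by lra. rewrite !Rabs_mult.
    rewrite (Rabs_right (sqrt p)), (Rabs_right (sqrt (1 - p))) by (apply Rle_ge, sqrt_pos).
    destruct hs; subst; [rewrite Rabs_R1 | rewrite Rabs_left by lra]; ring.
Qed.


Theorem mainTheorem5 :
  forall (p s : R), 0 <= p <= 1 -> (s = 1 \/ s = -1) ->
  forall c : nat -> nat -> R, (c = PhiSt p s \/ c = PsiSt p s) ->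
    (* the integral defining Q exists for every pair of angles *)
    (forall th ph, exists I, improper_int2 (Qintegrand 2 c th ph) I) /\
    (* Q(rho) = sup = 4/pi sqrt(p(1-p)) *)
    is_lub (Qset 2 c) (4 / PI * sqrt (p * (1 - p))) /\
    (* the negativity of rho is sqrt(p(1-p)) *)
    negativity_is (ptA (rho4 c)) (sqrt (p * (1 - p))) /\
    (* |E^{0,0}| = 4/pi sqrt(p(1-p)) *)
    (exists E, improper_int2 (fun u v => dens 2 c 0 0 u v * sgn (u * v)) E /\
               Rabs E = 4 / PI * sqrt (p * (1 - p))).
Proof.
  intros p s hp hs c hc. destruct hc as [hc | hc]; subst c.
  - destruct (part_Phi p s hp hs) as [h1 [h2 h3]].
    split; [exact h1 | split; [exact h2 | split; [apply neg_Phi; auto | exact h3]]].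
  - destruct (part_Psi p s hp hs) as [h1 [h2 h3]].
    split; [exact h1 | split; [exact h2 | split; [apply neg_Psi; auto | exact h3]]].
Qed.
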